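(* Let $X$ satisfy assumptions (A) described in the context, with Lévy density $\nu$. If a measurable function $f:\mathbb{R}^d\to[0,\infty)$ satisfies $\int_{\mathbb{R}^d}f(y)(\nu(y)\wedge1)\,dy<\infty$, then for every $x\in\mathbb{R}^d$ we have $\int_{\mathbb{R}^d}f(y)(\nu(x-y)\wedge1)\,dy<\infty$.
   Context: Assumptions (A): (H0) $X$ is a pure-jump isotropic Lévy process in $\mathbb{R}^d$ whose Lévy measure is infinite with density $\nu(x)=\nu(|x|)$. (H1) $\nu(r)$ is nonincreasing, absolutely continuous, $-\nu'(r)/r$ nonincreasing (with $\nu(r)=-\int_r^\infty\nu'(\rho)d\rho$), and for some $a_1$: $\nu(r)\le a_1\nu(r+1)$ for $r\ge1$, $\nu(r)\le a_1\nu(2r)$ for $0<r\le1$. (H2) There is $a_2$ such that for every $x_0$, $r\in(0,1]$ and every $h\ge0$ on $\mathbb{R}^d$ harmonic in $B(x_0,r)$, $\sup_{B(x_0,r/2)}h\le a_2\inf_{B(x_0,r/2)}h$ (a Borel $f$ is harmonic in open $D$ if $f(x)=E^xf(X_{\tau_B})$, absolutely convergent, for $x\in B$, for all bounded open $B$ with $\overline B\subset D$, $\tau_B=\inf\{t>0:X_t\notin B\}$). *)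

(* Defs.v *)
From HB Require Import structures.
From mathcomp Require Import all_boot all_order all_algebra.
From mathcomp Require Import all_classical all_reals all_analysis.
Set Implicit Arguments. Unset Strict Implicit. Unset Printing Implicit Defensive.
Import Order.TTheory GRing.Theory Num.Theory Num.Def.
Import numFieldNormedType.Exports.
Local Open Scope classical_set_scope.
Local Open Scope ring_scope.

(* R^d is modelled as d.-tuple R, which mathcomp-analysis equips with the
   product (= Borel) sigma-algebra generated by the coordinate projections. *)

Section Defs.
Context {R : realType}.

(** Lebesgue integral over R^n of a nonnegative function, written as the
    iterated one-dimensional Lebesgue integral (Tonelli). *)
Fixpoint lebint (n : nat) : (n.-tuple R -> \bar R) -> \bar R :=
  match n with
  | 0 => fun g => g [tuple]
  | n'.+1 => fun g => (\int[@lebesgue_measure R]_(t in [set: R])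
                          lebint (fun v => g (cons_tuple t v)))%E
  end.

Variable d : nat.

Definition zerov : d.-tuple R := [tuple 0 | i < d].
Definition addv (x y : d.-tuple R) : d.-tuple R := [tuple tnth x i + tnth y i | i < d].
Definition subv (x y : d.-tuple R) : d.-tuple R := [tuple tnth x i - tnth y i | i < d].
Definition dotv (x y : d.-tuple R) : R := \sum_(i < d) tnth x i * tnth y i.
Definition enorm (x : d.-tuple R) : R := Num.sqrt (dotv x x).

Definition ballv (x : d.-tuple R) (r : R) : set (d.-tuple R) :=
  [set y | enorm (subv y x) < r].
Definition openv (D : set (d.-tuple R)) : Prop :=
  forall x, D x -> exists2 r : R, 0 < r & ballv x r `<=` D.
Definition boundedv (B : set (d.-tuple R)) : Prop :=
  exists M : R, forall y, B y -> enorm y <= M.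
Definition closurev (B : set (d.-tuple R)) : set (d.-tuple R) :=
  [set y | forall r : R, 0 < r -> exists2 z, B z & enorm (subv z y) < r].

(** (H0), part on the Levy density nu(x) = nu(|x|): nonnegative density of a
    Levy measure (int (|y|^2 /\ 1) nu(y) dy < oo) which is infinite. *)
Definition H0_density (nu : R -> R) : Prop :=
  [/\ forall r, 0 < r -> 0 <= nu r,
      (lebint (fun y : d.-tuple R => (minr (enorm y ^+ 2) 1 * nu (enorm y))%:E) < +oo)%E
    & lebint (fun y : d.-tuple R => (nu (enorm y))%:E) = +oo%E].

(** characteristic exponent psi(xi) = int (1 - cos(xi.y)) nu(y) dy of the
    pure-jump isotropic (hence symmetric, drift-free) Levy process *)
Definition levy_exponent (nu : R -> R) (xi : d.-tuple R) : R :=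
  fine (lebint (fun y : d.-tuple R => ((1 - cos (dotv xi y)) * nu (enorm y))%:E)).

Section Process.
Context {dO : measure_display} {O : measurableType dO} (P : probability O R).
Variable X : R -> O -> d.-tuple R.

(** (H0), part on X: X is a Levy process (X_0 = 0, cadlag paths, independent
    stationary increments) with Levy triplet (0, 0, nu(|y|) dy).  Independence
    and stationarity of increments together with the law are expressed via the
    joint characteristic function of the increments:
      E exp(i sum_k xi_k.(X_{t_{k+1}} - X_{t_k})) = prod_k exp(-(t_{k+1}-t_k) psi(xi_k)),
    split into real and imaginary parts. *)
Definition is_isotropic_pure_jump_levy (nu : R -> R) : Prop :=
  [/\ forall w, X 0 w = zerov,
      forall t, measurable_fun [set: O] (X t),
      forall w (i : 'I_d) (t : R), 0 <= t ->
        (fun s => tnth (X s w) i) x @[x --> t^'+] --> tnth (X t w) i,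
      forall w (i : 'I_d) (t : R), 0 < t ->
        exists l : R, (fun s => tnth (X s w) i) x @[x --> t^'-] --> l
    & forall (n : nat) (t : nat -> R) (xi : nat -> d.-tuple R),
        0 <= t 0%N -> (forall k, t k <= t k.+1) ->
        let S := fun w => \sum_(k < n) dotv (xi k) (subv (X (t k.+1) w) (X (t k) w)) in
        (\int[P]_w (cos (S w))%:E
           = (expR (- \sum_(k < n) (t k.+1 - t k) * levy_exponent nu (xi k)))%:E)%E
        /\ (\int[P]_w (sin (S w))%:E = 0)%E].

Definition exit_time (x : d.-tuple R) (B : set (d.-tuple R)) (w : O) : \bar R :=
  ereal_inf [set t%:E | t in [set t : R | 0 < t /\ ~ B (addv x (X t w))]].

(** f(X_{tau_B}) under P^x (taken to be 0 on {tau_B = +oo}) *)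
Definition at_exit (x : d.-tuple R) (B : set (d.-tuple R)) (f : d.-tuple R -> R)
    (w : O) : R :=
  if exit_time x B w is s%:E then f (addv x (X s w)) else 0.

Definition harmonic (f : d.-tuple R -> R) (D : set (d.-tuple R)) : Prop :=
  forall (B : set (d.-tuple R)) (x : d.-tuple R),
    openv B -> boundedv B -> closurev B `<=` D -> B x ->
    (\int[P]_w `|at_exit x B f w|%:E < +oo)%E /\
    (f x)%:E = (\int[P]_w (at_exit x B f w)%:E)%E.

Definition H2_harnack : Prop :=
  exists a2 : R, forall (x0 : d.-tuple R) (r : R), 0 < r <= 1 ->
    forall h : d.-tuple R -> R, measurable_fun [set: d.-tuple R] h ->
      (forall y, 0 <= h y) -> harmonic h (ballv x0 r) ->
      forall y z, ballv x0 (r / 2) y -> ballv x0 (r / 2) z -> h y <= a2 * h z.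
End Process.
End Defs.

Definition H1_profile {R : realType} (nu : R -> R) : Prop :=
  [/\ forall r s : R, 0 < r -> r <= s -> nu s <= nu r,
      exists nu' : R -> R,
        [/\ forall r : R, 0 < r ->
              (@lebesgue_measure R).-integrable `[r, +oo[ (fun rho => (nu' rho)%:E),
            forall r : R, 0 < r ->
              (nu r)%:E = (- \int[@lebesgue_measure R]_(rho in `[r, +oo[) (nu' rho)%:E)%E
          & forall r s : R, 0 < r -> r <= s -> - nu' s / s <= - nu' r / r]
    & exists a1 : R,
        (forall r : R, 1 <= r -> nu r <= a1 * nu (r + 1)) /\
        (forall r : R, 0 < r -> r <= 1 -> nu r <= a1 * nu (2 * r))].

(* Main.v *)
Require Import Defs.
From HB Require Import structures.
From mathcomp Require Import all_boot all_order all_algebra.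
From mathcomp Require Import all_classical all_reals all_analysis.
From mathcomp Require Import ring lra.
Import Order.TTheory GRing.Theory Num.Theory Num.Def.
Local Open Scope classical_set_scope.
Local Open Scope ring_scope.

Section L.
Variable R : realType.
Local Notation mu := (@lebesgue_measure R).
Local Open Scope ereal_scope.
Import HBNNSimple.
Lemma int_le (phi psi : R -> \bar R) : (forall t, phi t <= psi t) ->
  (forall t, 0 <= psi t) ->
  \int[mu]_(t in setT) phi t <= \int[mu]_(t in setT) psi t.
Proof.
move=> le ps0; rewrite integralE.
apply: (@le_trans _ _ (\int[mu]_(t in setT) phi^\+ t - 0)).
  by apply: leeB => //; exact: integral_ge0.
rewrite sube0 [leRHS]ge0_integralE; last by move=> x _; exact: ps0.
rewrite ge0_integralE; last by move=> x _; rewrite funeposE le_max lexx orbT.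
apply: ereal_sup_le => _ [h hle <-]; exists h => // x.
apply: (le_trans (hle x)); rewrite !patch_setT funeposE.
by rewrite ge_max le ps0.
Qed.

Lemma lebint_ge0 n (g : n.-tuple R -> \bar R) : (forall v, 0 <= g v) -> 0 <= lebint g.
Proof.
elim: n g => [|n IH] g g0 /=; first exact: g0.
by apply: integral_ge0 => t _; apply: IH.
Qed.

Lemma lebint_le n (g1 g2 : n.-tuple R -> \bar R) : (forall v, g1 v <= g2 v) ->
  (forall v, 0 <= g2 v) -> lebint g1 <= lebint g2.
Proof.
elim: n g1 g2 => [|n IH] g1 g2 le g20 /=; first exact: le.
apply: int_le => t; first by apply: IH.
exact: lebint_ge0.
Qed.
Lemma int_scale (psi : R -> \bar R) (k : R) : (0 <= k)%R ->
  (forall t, 0 <= psi t) ->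
  \int[mu]_(t in setT) (k%:E * psi t) <= k%:E * \int[mu]_(t in setT) psi t.
Proof.
move=> k0 ps0; have [->|kn0] := eqVneq k 0%R.
  rewrite mul0e; under eq_integral do rewrite mul0e.
  by rewrite integral0.
have kp : (0 < k)%R by rewrite lt_def kn0.
rewrite [X in _ <= _ * X]ge0_integralE; last by move=> x _; exact: ps0.
rewrite ge0_integralE; last by move=> x _; rewrite mule_ge0.
apply: ge_ereal_sup => _ [h hle <-].
have ki0 : (0 <= k^-1)%R by rewrite invr_ge0.
pose h' := scale_nnsfun h ki0.
have -> : sintegral mu h = sintegral mu (cst k \* h')%R.
  apply: eq_sintegral => x /=; rewrite mulrA divff ?mul1r //.
rewrite sintegralrM; apply: lee_wpmul2l; first by rewrite lee_fin.
apply: ereal_sup_ubound; exists h' => // x.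
rewrite !patch_setT /= -(@lee_pmul2l _ k%:E) ?lte_fin //.
rewrite -EFinM mulrA divff ?mul1r //.
by have := hle x; rewrite !patch_setT.
Qed.
Lemma sint0 (h : {nnsfun measurableTypeR R >-> R}) : (forall t, t != 0%R -> h t = 0%R) ->
  sintegral mu h = 0.
Proof.
move=> h0; rewrite sintegralE; apply: fsbig1 => r _.
have [->|rn0] := eqVneq r 0%R; first by rewrite mul0e.
rewrite [X in _ * X](_ : _ = 0) ?mule0 //.
apply/eqP; rewrite eq_le measure_ge0 andbT.
rewrite -(lebesgue_measure_set1 (0:R)%R).
apply: le_measure; rewrite ?inE.
- by apply: measurable_funPTI; exact: measurable_set1.
- exact: measurable_set1.
move=> t /= ht; apply/eqP; apply: contraT => tn0.
by move: ht; rewrite h0 // => r0; move: rn0; rewrite -r0 eqxx.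
Qed.

Lemma int_le0 (phi psi : R -> \bar R) : (forall t, 0 <= phi t) ->
  (forall t, t != 0%R -> phi t <= psi t) ->
  \int[mu]_(t in setT) phi t <= \int[mu]_(t in setT) psi t.
Proof.
move=> ph0 le.
have psn : \int[mu]_(t in setT) psi^\- t = 0.
  apply/eqP; rewrite eq_le integral_ge0 ?andbT; last by move=> t _; exact: funeneg_ge0.
  rewrite ge0_integralE; last by move=> t _; exact: funeneg_ge0.
  apply: ge_ereal_sup => _ [h hle <-]; rewrite sint0 // => t tn0.
  apply/eqP; rewrite eq_le fun_ge0 andbT -lee_fin.
  apply: (le_trans (hle t)); rewrite patch_setT funenegE ge_max lexx andbT.
  by rewrite leeNl oppe0 (le_trans (ph0 t) (le t tn0)).
rewrite [leRHS]integralE psn sube0.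
rewrite [leRHS]ge0_integralE; last by move=> t _; exact: funepos_ge0.
rewrite ge0_integralE; last by move=> t _; exact: ph0.
apply: ge_ereal_sup => _ [h hle <-].
have m0 : measurable [set (0:R)%R] by exact: measurable_set1.
have m1 : measurable (~` [set (0:R)%R]) by exact: measurableC.
have i1 (y : R) : (y \in [set 0%R]) = (y == 0%R).
  by apply/idP/eqP => [/set_mem|->] //; exact: mem_set.
have i2 (y : R) : (y \in ~` [set 0%R]) = (y != 0%R).
  by apply/idP/idP => [/set_mem/eqP|/eqP ?] //; exact: mem_set.
pose h0 := proj_nnsfun h m0.
pose h1 := proj_nnsfun h m1.
have -> : sintegral mu h = sintegral mu (h1 \+ h0)%R.
  apply: eq_sintegral => x /=; rewrite !measurable_realfun.mindicE i1 i2.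
  by have [->|xn0] := eqVneq x 0%R; rewrite /= ?mulr0 ?mulr1 ?add0r ?addr0.
rewrite sintegralD (@sint0 h0) ?adde0; last first.
  by move=> t tn0 /=; rewrite measurable_realfun.mindicE i1 (negbTE tn0) mulr0.
apply: ereal_sup_ubound; exists h1 => // x.
rewrite patch_setT /= measurable_realfun.mindicE i2.
have [->|xn0] := eqVneq x 0%R; first by rewrite mulr0 funepos_ge0.
rewrite mulr1 funeposE le_max; apply/orP; left.
by apply: (le_trans _ (le x xn0)); have := hle x; rewrite patch_setT.
Qed.

Lemma lebint0 n : lebint (fun _ : n.-tuple R => 0) = 0.
Proof.
elim: n => [|n IH] //=.
rewrite (_ : (fun t => lebint _) = fun _ => 0); first exact: integral0.
by apply/funext => t; rewrite IH.
Qed.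

Lemma lebint_scale n (k : R) (g : n.-tuple R -> \bar R) : (0 <= k)%R ->
  (forall v, 0 <= g v) -> lebint (fun v => k%:E * g v) <= k%:E * lebint g.
Proof.
move=> k0; elim: n g => [|n IH] g g0 /=; first by [].
apply: le_trans (int_scale _ _ k0 _); last by move=> t; exact: lebint_ge0.
apply: int_le => t; first exact: IH.
by apply: mule_ge0; [rewrite lee_fin|exact: lebint_ge0].
Qed.

Lemma lebint_le0 n (g1 g2 : n.+1.-tuple R -> \bar R) : (forall v, 0 <= g1 v) ->
  (forall t w, t != 0%R -> g1 (cons_tuple t w) <= g2 (cons_tuple t w)) ->
  lebint g1 <= lebint g2.
Proof.
move=> g10 le /=; apply: int_le0 => t; first exact: lebint_ge0.
move=> tn0; apply: lebint_le => w; first exact: le.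
exact: le_trans (g10 _) (le _ _ tn0).
Qed.
End L.
Section E.
Variables (R : realType) (n : nat).
Implicit Types (v x : n.-tuple R).

Lemma dot_ge0 v : 0 <= dotv v v.
Proof. by apply: sumr_ge0 => i _; rewrite -expr2 sqr_ge0. Qed.

Lemma enorm_ge0 v : 0 <= enorm v.
Proof. exact: sqrtr_ge0. Qed.

Lemma enorm_sq v : enorm v ^+ 2 = dotv v v.
Proof. by rewrite /enorm sqr_sqrtr // dot_ge0. Qed.

Lemma coord_le v i : `|tnth v i| <= enorm v.
Proof.
rewrite -sqrtr_sqr /enorm ler_sqrt ?dot_ge0 //.
rewrite /dotv (bigD1 i) //= expr2 lerDl.
by apply: sumr_ge0 => j _; rewrite -expr2 sqr_ge0.
Qed.

Lemma coord_pos v i : tnth v i != 0 -> 0 < enorm v.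
Proof. by move=> h; apply: lt_le_trans (coord_le v i); rewrite normr_gt0. Qed.

Definition S1 x := \sum_i `|tnth x i|.

Lemma S1_ge0 x : 0 <= S1 x.
Proof. by apply: sumr_ge0 => i _. Qed.

Lemma dist_lb x v :
  enorm v ^+ 2 - 2 * S1 x * enorm v <= enorm (subv x v) ^+ 2.
Proof.
rewrite !enorm_sq; set a := enorm v.
have -> : dotv v v - 2 * S1 x * a =
    \sum_i (tnth v i * tnth v i - 2 * `|tnth x i| * a).
  by rewrite sumrB /S1 mulr_sumr mulr_suml.
apply: ler_sum => i _; rewrite tnth_mktuple.
have h1 := coord_le v i; have h2 : tnth x i * tnth v i <= `|tnth x i| * a.
  apply: (le_trans (ler_norm _)); rewrite normrM.
  by apply: ler_wpM2l.
nra.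
Qed.

Lemma dist_ge x v : 2 * S1 x + 1 <= enorm v ->
  enorm v - (2 * S1 x + 1) <= enorm (subv x v).
Proof.
move=> hL; have h := dist_lb x v; have s0 := S1_ge0 x.
have b0 := enorm_ge0 (subv x v).
set a := enorm v in hL h *; set b := enorm (subv x v) in h b0 *.
set S := S1 x in hL h s0 *.
nra.
Qed.
End E.
Arguments dot_ge0 {R n}. Arguments enorm_ge0 {R n}. Arguments enorm_sq {R n}.
Arguments coord_le {R n}. Arguments coord_pos {R n v i}. Arguments S1 {R n}.
Arguments S1_ge0 {R n}. Arguments dist_lb {R n}. Arguments dist_ge {R n}.
Section N.
Variables (R : realType) (nu : R -> R) (a1 : R).
Hypothesis mono : forall r s : R, 0 < r -> r <= s -> nu s <= nu r.
Hypothesis nn : forall r : R, 0 < r -> 0 <= nu r.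
Hypothesis ha1 : forall r : R, 1 <= r -> nu r <= a1 * nu (r + 1).
Hypothesis ha2 : forall r : R, 0 < r -> r <= 1 -> nu r <= a1 * nu (2 * r).

Definition AA := maxr a1 1.

Lemma AA_ge1 : 1 <= AA.
Proof. by rewrite /AA le_max lexx orbT. Qed.

Lemma step1 r : 1 <= r -> nu r <= AA * nu (r + 1).
Proof.
move=> r1; apply: le_trans (ha1 r r1) _; apply: ler_wpM2r.
  by apply: nn; lra.
by rewrite /AA le_max lexx.
Qed.

Lemma stepN (k : nat) r : 1 <= r -> nu r <= AA ^+ k * nu (r + k%:R).
Proof.
move=> r1; elim: k => [|k IH]; first by rewrite expr0 mul1r addr0.
apply: (le_trans IH); rewrite exprSr -mulrA; apply: ler_wpM2l.
  by apply: exprn_ge0; apply: le_trans AA_ge1.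
rewrite -addn1 natrD addrA; apply: step1.
by have := ler0n R k; lra.
Qed.

Lemma nu_zero M : 0 < M -> nu M = 0 -> forall r, 0 < r -> nu r = 0.
Proof.
move=> M0 nM.
have A0 : 0 <= AA by apply: le_trans AA_ge1.
have big r : 1 <= r -> nu r = 0.
  move=> r1; apply/eqP; rewrite eq_le nn ?andbT; last by lra.
  apply: (le_trans (stepN (truncn M).+1 r r1)).
  have hM := truncnS_gt M.
  have : nu (r + (truncn M).+1%:R) <= nu M by apply: mono => //; lra.
  rewrite nM => h; rewrite -(mulr0 (AA ^+ (truncn M).+1)).
  by apply: ler_wpM2l => //; apply: exprn_ge0.
have small (j : nat) r : 0 < r -> 1 <= 2 ^+ j * r -> nu r = 0.
  elim: j r => [|j IH] r r0; first by rewrite expr0 mul1r; apply: big.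
  move=> hj; have [r1|r1] := lerP 1 r; first exact: big.
  apply/eqP; rewrite eq_le nn ?andbT //.
  apply: (le_trans (ha2 r r0 (ltW r1))).
  rewrite (IH (2 * r)) ?mulr0 //; first by lra.
  by rewrite mulrA -exprSr.
move=> r r0; apply: (small (truncn r^-1).+1) => //.
have h1 := truncnS_gt r^-1.
have h2 : ((truncn r^-1).+1%:R : R) <= 2 ^+ (truncn r^-1).+1.
  rewrite -natrX ler_nat; exact: ltnW (ltn_expl _ _).
have h3 : r^-1 * r = 1 by rewrite mulVf // gt_eqF.
nra.
Qed.
End N.
Arguments AA {R}.

Section M.
Variables (R : realType) (n : nat) (nu : R -> R) (a1 : R).
Hypothesis mono : forall r s : R, 0 < r -> r <= s -> nu s <= nu r.
Hypothesis nn : forall r : R, 0 < r -> 0 <= nu r.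
Hypothesis ha1 : forall r : R, 1 <= r -> nu r <= a1 * nu (r + 1).
Hypothesis ha2 : forall r : R, 0 < r -> r <= 1 -> nu r <= a1 * nu (2 * r).
Hypothesis inf : lebint (fun y : n.+1.-tuple R => (nu (enorm y))%:E) = +oo%E.

Lemma nuM_pos M : 0 < M -> 0 < nu M.
Proof.
move=> M0; rewrite lt_def nn // andbT; apply/negP => /eqP h0.
have z := @nu_zero _ _ _ mono nn ha1 ha2 _ M0 h0.
have : (lebint (fun y : n.+1.-tuple R => (nu (enorm y))%:E) <= 0)%E.
  apply: (@le_trans _ _ (lebint (fun y : n.+1.-tuple R => (maxr (nu (enorm y)) 0)%:E))).
    apply: lebint_le => v; first by rewrite lee_fin le_max lexx.
    by rewrite lee_fin le_max lexx orbT.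
  rewrite -(lebint0 R n.+1); apply: lebint_le0 => [v|t w tn0].
    by rewrite lee_fin le_max lexx orbT.
  rewrite z ?maxxx //; exact: (@coord_pos _ _ (cons_tuple t w) ord0).
by rewrite inf.
Qed.

Lemma far (x v : n.+1.-tuple R) : 2 * S1 x + 1 + 1 <= enorm v ->
  nu (enorm (subv x v)) <= AA a1 ^+ (truncn (2 * S1 x + 1)).+1 * nu (enorm v).
Proof.
set L := 2 * S1 x + 1; set N := (truncn L).+1 => hv.
have eL : L = 2 * S1 x + 1 by [].
have S0 := S1_ge0 x.
have hb : enorm v - L <= enorm (subv x v).
  apply: dist_ge; rewrite -/L; lra.
have hN := truncnS_gt L; rewrite -/N in hN.
apply: (@le_trans _ _ (nu (enorm v - L))); first by apply: mono => //; lra.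
apply: le_trans (@stepN _ _ _ nn ha1 N (enorm v - L) _) _; first by lra.
apply: ler_wpM2l; first by apply: exprn_ge0; exact: le_trans ler01 (AA_ge1 _ a1).
apply: mono; lra.
Qed.

Definition Lc (x : n.+1.-tuple R) := 2 * S1 x + 1.
Definition Kc x := AA a1 ^+ (truncn (Lc x)).+1.
Definition cc x := minr (nu (Lc x + 1)) 1.
Definition Cc x := maxr (Kc x) (cc x)^-1.

Lemma pointwise (x v : n.+1.-tuple R) :
  minr (nu (enorm (subv x v))) 1 <=
  Cc x * (if tnth v ord0 == 0 then 1 else minr (nu (enorm v)) 1).
Proof.
rewrite /Cc /cc /Kc; set L := Lc x; set K := AA a1 ^+ _; set c := minr (nu (L + 1)) 1.
set C := maxr K c^-1.
have K1 : 1 <= K by apply: exprn_ege1; exact: AA_ge1.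
have CK : K <= C by rewrite /C le_max lexx.
have L0 : 0 <= L by have := S1_ge0 x; rewrite /L /Lc; lra.
have c0 : 0 < c by rewrite /c lt_min ltr01 andbT; apply: nuM_pos; lra.
have Cc : c^-1 <= C by rewrite /C le_max lexx orbT.
have le1 : minr (nu (enorm (subv x v))) 1 <= 1 by rewrite ge_min lexx orbT.
have [v0|v0] := eqVneq (tnth v ord0) 0; first by rewrite mulr1; lra.
have a0 := coord_pos v0.
have ma0 : 0 <= minr (nu (enorm v)) 1 by rewrite le_min ler01 andbT nn.
have [aM|aM] := lerP (L + 1) (enorm v).
  have hf := far x v aM.
  apply: (@le_trans _ _ (K * minr (nu (enorm v)) 1)); last by apply: ler_wpM2r.
  have [h|h] := lerP (nu (enorm v)) 1.
    by apply: le_trans hf; rewrite ge_min lexx.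
  by rewrite mulr1; lra.
have hc : c <= minr (nu (enorm v)) 1.
  rewrite /c le_min; apply/andP; split; last by rewrite ge_min lexx orbT.
  by rewrite ge_min; apply/orP; left; apply: mono => //; lra.
apply: (@le_trans _ _ (c^-1 * minr (nu (enorm v)) 1)).
  apply: le_trans le1 _; rewrite -{1}(mulVf (lt0r_neq0 c0)).
  by apply: ler_wpM2l; [rewrite invr_ge0 ltW | exact: hc].
by apply: ler_wpM2r.
Qed.
End M.

Lemma Cc_ge0 (R : realType) n nu a1 (x : n.+1.-tuple R) : 0 <= Cc R n nu a1 x.
Proof.
rewrite /Cc le_max; apply/orP; left; rewrite /Kc.
apply: le_trans ler01 _; apply: exprn_ege1; exact: AA_ge1.
Qed.

Theorem corollary5p3 (R : realType) (d : nat) (hd : (0 < d)%N)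
  (nu : R -> R) (dO : measure_display) (O : measurableType dO)
  (P : probability O R) (X : R -> O -> d.-tuple R) :
  H0_density d nu ->
  is_isotropic_pure_jump_levy P X nu ->
  H1_profile nu ->
  H2_harnack P X ->
  forall f : d.-tuple R -> R,
    measurable_fun [set: d.-tuple R] f ->
    (forall y, 0 <= f y) ->
    (lebint (fun y : d.-tuple R => (f y * minr (nu (enorm y)) 1)%:E) < +oo)%E ->
    forall x : d.-tuple R,
      (lebint (fun y : d.-tuple R => (f y * minr (nu (enorm (subv x y))) 1)%:E) < +oo)%E.
Proof.
case: d hd X => [//|n] _ X.
move=> [nn _ inf] _ [mono _ [a1 [ha1 ha2]]] _ f _ f0 hF x.
set C := Cc R n nu a1 x.
have C0 : 0 <= C by exact: Cc_ge0.
pose m (v : n.+1.-tuple R) := if tnth v ord0 == 0 then 1 else minr (nu (enorm v)) 1.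
have m0 v : 0 <= m v.
  rewrite /m; case: ifP => // /negbT v0.
  by rewrite le_min ler01 andbT nn // (coord_pos v0).
pose G v := (f v * m v)%:E.
have G0 v : (0 <= G v)%E by rewrite lee_fin mulr_ge0.
have h1 : (lebint (fun y : n.+1.-tuple R => (f y * minr (nu (enorm (subv x y))) 1)%:E)
    <= lebint (fun v => C%:E * G v))%E.
  apply: lebint_le => v; last by rewrite mule_ge0 // lee_fin.
  rewrite -EFinM lee_fin mulrCA; apply: ler_wpM2l => //.
  exact: (@pointwise _ _ _ _ mono nn ha1 ha2 inf x v).
have h2 := @lebint_scale _ _ _ _ C0 G0.
have h3 : (lebint G <= lebint (fun y : n.+1.-tuple R => (f y * minr (nu (enorm y)) 1)%:E))%E.
  apply: lebint_le0 => // t w tn0.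
  by rewrite /G /m /= (negbTE tn0).
have G0' := @lebint_ge0 _ _ _ G0.
have := le_lt_trans h3 hF.
move: G0' h2; case: (lebint G) => [r| |] //= _ h2 _.
by apply: le_lt_trans h1 _; apply: le_lt_trans h2 _; rewrite -EFinM ltry.
Qed.
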